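(* Consider the constrained decoding algorithm below, run with a language model $\mathsf{lm}$ and an AST predicate $\varphi$, using a function $\mathsf{realizable}$ that is both over-approximate and consistent, and with a worklist implementing fair enumeration (every string that has been enqueued is eventually dequeued). Then constrained decoding is complete: if there exists a string $\omega^*\in\Sigma^*$ with $\varphi(\mathsf{parse}(\omega^* ))$, the algorithm returns a solution (a string $\omega$ with $\varphi(\mathsf{parse}(\omega))$).
   Context: Let $\Sigma$ be a finite alphabet, $\mathsf{AST}$ a set of abstract syntax trees, and $\mathsf{parse}\colon \Sigma^*\to\mathsf{AST}\cup\{\bot\}$ a parsing function. A semantic constraint is a predicate $\varphi\colon\mathsf{AST}\to\mathrm{bool}$ (taken false on $\bot$). A token vocabulary $\mathcal{T}$ is a set of finite strings over $\Sigma$ such that every string in $\Sigma^*$ is a concatenation of tokens; it contains a distinguished one-character token $\mathsf{END}$. Token sequences are identified with the strings they concatenate to. It is assumed that every string satisfying the constraint contains $\mathsf{END}$ exactly once, as its last character. A language model is a function $\mathsf{lm}\colon\mathcal{T}^*\to\mathcal{T}\to[0,1]$. Constrained decoding algorithm: initialize a worklist (an abstract queue data structure with operations enqueue/dequeue) to contain only the empty string $\epsilon$. While the worklist is nonempty: dequeue a string $\omega$; for each $\tau\in\mathcal{T}$, if $\mathsf{realizable}(\omega\tau,\varphi)$ holds then, if $\tau=\mathsf{END}$, return $\omega\tau$; otherwise enqueue $\omega\tau$ with priority $\mathsf{lm}(\omega,\tau)$. If the worklist becomes empty, return $\bot$. A realizability checker is over-approximate if $\big(\exists\omega'\in\Sigma^*.\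 \varphi(\mathsf{parse}(\omega\omega'))\big)\Rightarrow\mathsf{realizable}(\omega,\varphi)$ for all $\omega$; it is consistent if for every $\omega$ whose last character is $\mathsf{END}$, $\mathsf{realizable}(\omega,\varphi)\Leftrightarrow\varphi(\mathsf{parse}(\omega))$. *)

(* Defs.v *)
From mathcomp Require Import all_boot all_order all_algebra.
Set Implicit Arguments. Unset Strict Implicit. Unset Printing Implicit Defensive.
Import Order.TTheory GRing.Theory Num.Theory.

Section Decoding.
Variables (Sigma : finType) (AST : Type).

Definition sem (parse : seq Sigma -> option AST) (phi : AST -> bool)
  (w : seq Sigma) : bool :=
  if parse w is Some a then phi a else false.

(* The state of the algorithm: either still looping with the current worklist
   contents (string, priority) -- the worklist is an abstract multiset whose
   dequeue operation may remove any element -- or finished with a result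
   (Some w = returned w, None = returned bottom). *)
Variable R : realFieldType.
Inductive dstate :=
  | Running of seq (seq Sigma * R)
  | Done of option (seq Sigma).

Variables (voc : seq (seq Sigma)) (endc : Sigma)
  (real : seq Sigma -> bool) (lm : seq Sigma -> seq Sigma -> R).

Fixpoint process (w : seq Sigma) (ts : seq (seq Sigma)) (acc : seq (seq Sigma * R))
  : dstate :=
  match ts with
  | [::] => Running acc
  | t :: ts' =>
      if real (w ++ t) then
        if t == [:: endc] then Done (Some (w ++ t))
        else process w ts' (rcons acc (w ++ t, lm w t))
      else process w ts' acc
  end.

(* One iteration of the while loop; [d] records the dequeued string. *)
Inductive dstep : dstate -> option (seq Sigma) -> dstate -> Prop :=
  | dstep_empty : dstep (Running [::]) None (Done None)
  | dstep_deq (p : seq (seq Sigma * R)) (i : nat) (x : seq Sigma * R) :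
      i < size p -> x = nth x p i ->
      dstep (Running p) (Some x.1)
            (process x.1 voc (take i p ++ drop i.+1 p))
  | dstep_done (r : option (seq Sigma)) : dstep (Done r) None (Done r).

End Decoding.
Arguments Done {Sigma R}.
Arguments Running {Sigma R}.

(* Main.v *)
Require Import Defs.
From mathcomp Require Import all_boot all_order all_algebra.
Import Order.TTheory GRing.Theory Num.Theory.
Local Open Scope ring_scope.

Lemma process_spec (Sigma : finType) (R : realFieldType) (endc : Sigma)
  (real : seq Sigma -> bool) (lm : seq Sigma -> seq Sigma -> R) w ts acc :
  match process endc real lm w ts acc with
  | Done (Some v) => v = w ++ [:: endc] /\ real v
  | Done None => False
  | Running acc' => {subset acc <= acc'} /\
      forall t, t \in ts -> real (w ++ t) ->
        (t != [:: endc]) && (w ++ t \in map fst acc')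
  end.
Proof.
elim: ts acc => [|t ts IH] acc /=; first by split => // t; rewrite in_nil.
case Hr: (real (w ++ t)).
  case: eqP => [Et|Hne]; first by rewrite -Et; split.
  move: (IH (rcons acc (w ++ t, lm w t))).
  case: (process _ _ _ _ _ _) => [acc'|[v|]] //= [Hs Ht]; split.
    by move=> y Hy; apply: Hs; rewrite mem_rcons in_cons Hy orbT.
  move=> t'; rewrite in_cons => /orP [/eqP ->|Ht'] Hr'; last exact: Ht.
  apply/andP; split; first by apply/eqP.
  have: (w ++ t, lm w t) \in acc' by apply: Hs; rewrite mem_rcons mem_head.
  by move/(map_f fst).
move: (IH acc).
case: (process _ _ _ _ _ _) => [acc'|[v|]] //= [Hs Ht]; split => //.
move=> t'; rewrite in_cons => /orP [/eqP ->|Ht'] Hr'; last exact: Ht.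
by rewrite Hr in Hr'.
Qed.
Arguments process_spec {Sigma R}.

Lemma mem_remove (T : eqType) (R : Type) (p : seq (T * R)) i x y :
  (i < size p)%N -> x = nth x p i -> y \in map fst p -> y != x.1 ->
  y \in map fst (take i p ++ drop i.+1 p).
Proof.
move=> Hi Hx Hy Hne.
move: Hy; rewrite -{1}(cat_take_drop i p) (drop_nth x Hi) -Hx.
by rewrite !map_cat !mem_cat /= in_cons (negbTE Hne).
Qed.
Arguments mem_remove {T R p i x y}.

Lemma dstep_some (Sigma : finType) (R : realFieldType) voc (endc : Sigma)
  (real : seq Sigma -> bool) (lm : seq Sigma -> seq Sigma -> R) s w s' :
  dstep voc endc real lm s (Some w) s' ->
  exists p i x, [/\ s = Running p, (i < size p)%N, x = nth x p i, x.1 = w &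
     s' = process endc real lm x.1 voc (take i p ++ drop i.+1 p)].
Proof.
move Ed: (Some w) => d H; case: H Ed => // p i x Hi Hx [E].
by exists p, i, x; split; rewrite ?E.
Qed.
Arguments dstep_some {Sigma R voc endc real lm s w s'}.

Theorem mainTheorem2
  (Sigma : finType) (AST : Type) (parse : seq Sigma -> option AST)
  (R : realFieldType)
  (voc : seq (seq Sigma))
  (* every string is a concatenation of tokens *)
  (Hvoc : forall w : seq Sigma,
      exists ts : seq (seq Sigma), all (fun t => t \in voc) ts /\ flatten ts = w)
  (endc : Sigma) (HendT : [:: endc] \in voc)
  (phi : AST -> bool)
  (* every string satisfying the constraint contains END exactly once, last *)
  (Hend : forall w, sem parse phi w ->
      exists w0, w = rcons w0 endc /\ endc \notin w0)
  (lm : seq Sigma -> seq Sigma -> R)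
  (Hlm : forall w t, 0 <= lm w t <= 1)
  (realizable : seq Sigma -> (AST -> bool) -> bool)
  (Hover : forall w, (exists w', sem parse phi (w ++ w')) -> realizable w phi)
  (Hcons : forall w0, realizable (rcons w0 endc) phi = sem parse phi (rcons w0 endc))
  (run : nat -> dstate Sigma R) (deq : nat -> option (seq Sigma))
  (Hinit : run 0%N = Running [:: ([::], 1)])
  (Hstep : forall n, dstep voc endc (fun w => realizable w phi) lm
                        (run n) (deq n) (run n.+1))
  (* fair enumeration: every enqueued string is eventually dequeued
     (unless the algorithm has returned before) *)
  (Hfair : forall n p w, run n = Running p -> w \in map fst p ->
      exists m, (n <= m)%N /\ (deq m = Some w \/ exists res, run m = Done res))
  (Hsol : exists wstar, sem parse phi wstar) :
  exists m w, run m = Done (Some w) /\ sem parse phi w.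
Proof.
move: Hsol => [ws Hws].
have [w0 [Ew0 _]] := Hend _ Hws.
rewrite Ew0 in Hws.
have [ts [Hts Ets]] := Hvoc w0.
pose pre k := flatten (take k ts).
have Hext : forall k acc, (k <= size ts)%N ->
  match process endc (fun w => realizable w phi) lm (pre k) voc acc with
  | Done (Some v) => sem parse phi v
  | Done None => False
  | Running acc' => (k < size ts)%N /\ pre k.+1 \in map fst acc'
  end.
  move=> k acc Hk.
  have := process_spec endc (fun w => realizable w phi) lm (pre k) voc acc.
  case: (process _ _ _ _ _ _) => [acc'|[v|]] //; last first.
    by move=> [-> Hr]; rewrite cats1 -Hcons -cats1.
  move=> [Hs Ht].
  case: (ltnP k (size ts)) => Hlt.
    have Htk : nth [::] ts k \in voc := (allP Hts) _ (mem_nth [::] Hlt).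
    have Hpre : pre k.+1 = pre k ++ nth [::] ts k.
      by rewrite /pre (take_nth [::] Hlt) flatten_rcons.
    have Hr : realizable (pre k ++ nth [::] ts k) phi.
      apply: Hover; exists (flatten (drop k.+1 ts) ++ [:: endc]).
      by rewrite -Hpre /pre catA -flatten_cat cat_take_drop Ets cats1.
    have /andP[_ H] := Ht _ Htk Hr.
    by rewrite Hpre; split.
  have Hk' : k = size ts by apply/eqP; rewrite eqn_leq Hk Hlt.
  have Hr : realizable (pre k ++ [:: endc]) phi.
    apply: Hover; exists [::].
    by rewrite cats0 /pre Hk' take_size Ets cats1.
  by have /andP[/eqP] := Ht _ HendT Hr.
pose inv (st : dstate Sigma R) : Prop := match st with
    | Running p => exists k, (k <= size ts)%N /\ pre k \in map fst p
    | Done (Some v) => sem parse phi v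
    | Done None => False end.
have Inv : forall n, inv (run n).
  elim=> [|n IH]; first by rewrite Hinit; exists 0%N; rewrite /pre take0 /= mem_head.
  have H := Hstep n; move: IH H.
  move: (run n) (deq n) (run n.+1) => s d s' IHs H.
  case: H IHs; rewrite /inv => //.
  - by move=> [k [_]].
  move=> p i x Hi Hx [k [Hk Hm]].
  case: (pre k =P x.1) => [E|Hne].
    have := Hext k (take i p ++ drop i.+1 p) Hk; rewrite E.
    case: (process _ _ _ _ _ _) => [acc'|[v|]] // [Hlt Hm'].
    by exists k.+1.
  have Hm2 := mem_remove Hi Hx Hm (introN eqP Hne).
  have := process_spec endc (fun w => realizable w phi) lm x.1 voc (take i p ++ drop i.+1 p).
  case: (process _ _ _ _ _ _) => [acc'|[v|]] //; last first.
    by move=> [-> Hr]; rewrite cats1 -Hcons -cats1.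
  move=> [Hs _]; exists k; split => //.
  by move/mapP: Hm2 => [y Hy ->]; apply: map_f; apply: Hs.
have Q : forall k, (k <= size ts)%N -> exists n,
    (exists p, run n = Running p /\ pre k \in map fst p) \/
    (exists v, run n = Done (Some v)).
  elim=> [|k IH] Hk.
    by exists 0%N; left; exists [:: ([::], 1)]; rewrite Hinit /pre take0 /= mem_head.
  have [n [[p [Hr Hm]]|done]] := IH (ltnW Hk); last by exists n; right.
  have [m [_ [Hd|[res Hres]]]] := Hfair n p (pre k) Hr Hm; last first.
    have := Inv m; rewrite Hres; case: res Hres => // v Hres _.
    by exists m; right; exists v.
  have H := Hstep m; rewrite Hd in H.
  have [p' [i [x [_ _ _ Ex Hr']]]] := dstep_some H.
  have := Hext k (take i p' ++ drop i.+1 p') (ltnW Hk).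
  rewrite -Ex -Hr'.
  case Em: (run m.+1) => [acc'|[v|]] //.
    by move=> [_ Hm']; exists m.+1; left; exists acc'.
  by move=> _; exists m.+1; right; exists v.
suff [n Hn] : exists n v, run n = Done (Some v).
  move: Hn => [v Hv]; exists n, v; split => //.
  by have := Inv n; rewrite Hv.
have [n [[p [Hr Hm]]|[v Hv]]] := Q (size ts) (leqnn _); last by exists n, v.
have [m [_ [Hd|[res Hres]]]] := Hfair n p (pre (size ts)) Hr Hm; last first.
  have := Inv m; rewrite Hres; case: res Hres => // v Hres _.
  by exists m, v.
have H := Hstep m; rewrite Hd in H.
have [p' [i [x [_ _ _ Ex Hr']]]] := dstep_some H.
have := Hext (size ts) (take i p' ++ drop i.+1 p') (leqnn _).
rewrite -Ex -Hr'.
case Em: (run m.+1) => [acc'|[v|]] //; first by rewrite ltnn => -[].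
by move=> _; exists m.+1, v.
Qed.
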